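(* For every integer $m\geq 3$, there exists a set of $m$ points in $\mathbb{R}^{m-1}$ that is in crescent configuration.
   Context: A set of points in $\mathbb{R}^d$ is in general position if no $d+1$ of the points lie on a common (affine) hyperplane of $\mathbb{R}^d$ and no $d+2$ of the points lie on a common hypersphere of $\mathbb{R}^d$. A set of $n$ points in $\mathbb{R}^d$ is in crescent configuration if the points are in general position in $\mathbb{R}^d$, the Euclidean distances between the $\binom{n}{2}$ pairs of distinct points take exactly $n-1$ distinct values, and for every $1\le i\le n-1$ there is one of these distance values that is attained by exactly $i$ pairs of points. *)

(* Defs.v *)
(* real Euclidean space R^d, points as functions nat -> R
   where only coordinates 0..d-1 are used. *)
From Stdlib Require Import Reals List Arith Lia.
Import ListNotations.
Open Scope R_scope.

Definition sumR (d : nat) (f : nat -> R) : R :=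
  fold_right Rplus 0 (map f (seq 0 d)).

Definition edist (d : nat) (x y : nat -> R) : R :=
  sqrt (sumR d (fun k => (x k - y k) ^ 2)).

Definition distinct_points (d n : nat) (P : nat -> nat -> R) : Prop :=
  forall i j, (i < n)%nat -> (j < n)%nat -> i <> j ->
    exists k, (k < d)%nat /\ P i k <> P j k.

Definition index_subset (n : nat) (S : list nat) : Prop :=
  NoDup S /\ forall i, In i S -> (i < n)%nat.

Definition on_common_hyperplane (d : nat) (P : nat -> nat -> R) (S : list nat) : Prop :=
  exists (a : nat -> R) (b : R),
    (exists k, (k < d)%nat /\ a k <> 0) /\
    forall i, In i S -> sumR d (fun k => a k * P i k) = b.

Definition on_common_hypersphere (d : nat) (P : nat -> nat -> R) (S : list nat) : Prop :=
  exists (c : nat -> R) (r : R),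
    0 < r /\ forall i, In i S -> edist d (P i) c = r.

Definition general_position (d n : nat) (P : nat -> nat -> R) : Prop :=
  (forall S, index_subset n S -> length S = (d + 1)%nat ->
     ~ on_common_hyperplane d P S) /\
  (forall S, index_subset n S -> length S = (d + 2)%nat ->
     ~ on_common_hypersphere d P S).

Definition index_pairs (n : nat) : list (nat * nat) :=
  flat_map (fun j => map (fun i => (i, j)) (seq 0 j)) (seq 0 n).

Definition dist_mult (d n : nat) (P : nat -> nat -> R) (v : R) : nat :=
  length (filter (fun p => if Req_EM_T (edist d (P (fst p)) (P (snd p))) v
                           then true else false) (index_pairs n)).

Definition distance_values (d n : nat) (P : nat -> nat -> R) (L : list R) : Prop :=
  NoDup L /\
  (forall v, In v L <->
     exists i j, (i < j)%nat /\ (j < n)%nat /\ edist d (P i) (P j) = v).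

Definition crescent_configuration (d n : nat) (P : nat -> nat -> R) : Prop :=
  distinct_points d n P /\
  general_position d n P /\
  exists L : list R,
    distance_values d n P L /\
    length L = (n - 1)%nat /\
    forall i, (1 <= i <= n - 1)%nat ->
      exists v, In v L /\ dist_mult d n P v = i.

(* Main.v *)
Require Import Defs.
From Stdlib Require Import Reals List Arith Lia.
From Stdlib Require Import Lra FinFun.
Import ListNotations.
Open Scope R_scope.

Fixpoint Dv (n : nat) : R :=
  match n with
  | O => 0
  | S n' => Dv n' + ((1 - Dv n') / 2) ^ 2
  end.

Definition Pt (i k : nat) : R :=
  if Nat.ltb (S k) i then (1 - Dv k) / 2
  else if Nat.eqb (S k) i then 1 else 0.

Lemma Dv_bounds : forall n, 0 <= Dv n < 1.
Proof.
  induction n as [|n IH]; simpl; [lra|].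
  destruct IH as [H0 H1].
  split; nra.
Qed.

Lemma Dv_step : forall n, Dv n < Dv (S n).
Proof.
  intro n; simpl. destruct (Dv_bounds n). nra.
Qed.

Lemma Dv_lt : forall a b, (a < b)%nat -> Dv a < Dv b.
Proof.
  intros a b H; induction H.
  - apply Dv_step.
  - pose proof (Dv_step m); lra.
Qed.

Lemma Dv_inj : forall a b, Dv a = Dv b -> a = b.
Proof.
  intros a b H.
  destruct (Nat.lt_trichotomy a b) as [h|[h|h]]; auto.
  - apply Dv_lt in h; lra.
  - apply Dv_lt in h; lra.
Qed.

Lemma fold_plus_shift : forall l x,
  fold_right Rplus x l = fold_right Rplus 0 l + x.
Proof.
  induction l as [|a l IH]; intro x; simpl; [lra|].
  rewrite IH; lra.
Qed.

Lemma sumR_S : forall n f, sumR (S n) f = sumR n f + f n.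
Proof.
  intros n f; unfold sumR.
  rewrite seq_S, map_app, fold_right_app. simpl.
  rewrite fold_plus_shift. lra.
Qed.

Lemma sumR_zero : forall d f, (forall k, (k < d)%nat -> f k = 0) -> sumR d f = 0.
Proof.
  induction d as [|d IH]; intros f Hf.
  - reflexivity.
  - rewrite sumR_S, IH, Hf; [lra|lia|].
    intros; apply Hf; lia.
Qed.

Lemma sumR_single : forall d f k, (k < d)%nat ->
  (forall k', (k' < d)%nat -> k' <> k -> f k' = 0) -> sumR d f = f k.
Proof.
  induction d as [|d IH]; intros f k Hk Hf; [lia|].
  rewrite sumR_S.
  destruct (Nat.eq_dec k d) as [->|Hne].
  - rewrite sumR_zero; [lra|]. intros; apply Hf; lia.
  - rewrite (IH f k); [|lia|].
    + rewrite (Hf d); [lra|lia|lia].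
    + intros; apply Hf; lia.
Qed.

Lemma sum_dist : forall a b n, (a < b)%nat ->
  sumR n (fun k => (Pt a k - Pt b k) ^ 2) =
  if Nat.ltb n a then 0 else if Nat.ltb n b then Dv n else Dv (b - 1) + 1.
Proof.
  intros a b n Hab.
  induction n as [|n IH].
  - unfold sumR; simpl.
    destruct (Nat.ltb_spec 0 a); [reflexivity|].
    destruct (Nat.ltb_spec 0 b); [reflexivity|lia].
  - rewrite sumR_S, IH. unfold Pt.
    destruct (Nat.ltb_spec n a); destruct (Nat.ltb_spec (S n) a);
    destruct (Nat.ltb_spec n b); destruct (Nat.ltb_spec (S n) b);
    destruct (Nat.eqb_spec (S n) a); destruct (Nat.eqb_spec (S n) b);
    try lia; simpl;
    try (replace (b - 1)%nat with n by lia);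
    try (match goal with H : S n = a |- _ => subst a end; simpl);
    try lra; try nra.
Qed.

Lemma edist_P : forall d a b, (a < b)%nat -> (b <= d)%nat ->
  edist d (Pt a) (Pt b) = sqrt (Dv (b - 1) + 1).
Proof.
  intros d a b Hab Hbd. unfold edist.
  rewrite sum_dist by lia.
  destruct (Nat.ltb_spec d a); [lia|].
  destruct (Nat.ltb_spec d b); [lia|]. reflexivity.
Qed.

Lemma sqrtD_inj : forall a b, sqrt (Dv a + 1) = sqrt (Dv b + 1) -> a = b.
Proof.
  intros a b H. apply Dv_inj.
  destruct (Dv_bounds a), (Dv_bounds b).
  apply sqrt_inj in H; lra.
Qed.

Lemma index_pairs_S : forall n,
  index_pairs (S n) = index_pairs n ++ map (fun i => (i, n)) (seq 0 n).
Proof.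
  intro n. unfold index_pairs. rewrite seq_S, flat_map_app. simpl.
  rewrite app_nil_r. reflexivity.
Qed.

Lemma filter_true_all {A} (f : A -> bool) l :
  (forall x, In x l -> f x = true) -> filter f l = l.
Proof.
  induction l as [|x l IH]; intro H; simpl; auto.
  rewrite H by (left; auto). rewrite IH; auto. intros; apply H; right; auto.
Qed.

Lemma filter_false_all {A} (f : A -> bool) l :
  (forall x, In x l -> f x = false) -> filter f l = [].
Proof.
  induction l as [|x l IH]; intro H; simpl; auto.
  rewrite H by (left; auto). rewrite IH; auto. intros; apply H; right; auto.
Qed.

Lemma count_pairs : forall d i n, (1 <= i)%nat -> (n <= S d)%nat ->
  dist_mult d n Pt (sqrt (Dv (i - 1) + 1)) = if Nat.ltb i n then i else 0%nat.
Proof.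
  intros d i n Hi. induction n as [|n IH]; intro Hn.
  - reflexivity.
  - unfold dist_mult in *. rewrite index_pairs_S, filter_app, length_app.
    rewrite IH by lia.
    destruct (Nat.eq_dec n i) as [->|Hne].
    + rewrite filter_true_all.
      * rewrite length_map, length_seq.
        destruct (Nat.ltb_spec i i); [lia|].
        destruct (Nat.ltb_spec i (S i)); lia.
      * intros x Hx. apply in_map_iff in Hx. destruct Hx as [a [<- Ha]].
        apply in_seq in Ha. simpl.
        rewrite edist_P by lia.
        destruct (Req_EM_T _ _); auto.
    + rewrite filter_false_all.
      * simpl. destruct (Nat.ltb_spec i n); destruct (Nat.ltb_spec i (S n)); lia.
      * intros x Hx. apply in_map_iff in Hx. destruct Hx as [a [<- Ha]].
        apply in_seq in Ha. simpl.
        rewrite edist_P by lia.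
        destruct (Req_EM_T _ _) as [e|]; auto.
        apply sqrtD_inj in e. lia.
Qed.

Theorem mainTheorem2 :
  forall m : nat, (3 <= m)%nat ->
    exists P : nat -> nat -> R, crescent_configuration (m - 1) m P.
Proof.
  intros m Hm. exists Pt.
  split; [|split].
  -
    intros i j Hi Hj Hij.
    destruct (Nat.lt_trichotomy i j) as [h|[h|h]]; [|lia|].
    + exists (j - 1)%nat. split; [lia|]. unfold Pt.
      destruct (Nat.ltb_spec (S (j-1)) i); [lia|].
      destruct (Nat.eqb_spec (S (j-1)) i); [lia|].
      destruct (Nat.ltb_spec (S (j-1)) j); [lia|].
      destruct (Nat.eqb_spec (S (j-1)) j); [|lia]. lra.
    + exists (i - 1)%nat. split; [lia|]. unfold Pt.
      destruct (Nat.ltb_spec (S (i-1)) i); [lia|].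
      destruct (Nat.eqb_spec (S (i-1)) i); [|lia].
      destruct (Nat.ltb_spec (S (i-1)) j); [lia|].
      destruct (Nat.eqb_spec (S (i-1)) j); [lia|]. lra.
  - split.
    + intros Sl [HND Hlt] Hlen [a [b [[k0 [Hk0 Hak0]] Hpl]]].
      assert (Hall : forall i, (i < m)%nat -> In i Sl).
      { intros i Hi.
        assert (incl (seq 0 m) Sl) as Hinc.
        { apply (NoDup_length_incl HND).
          - rewrite length_seq; lia.
          - intros x Hx. apply in_seq. specialize (Hlt x Hx). lia. }
        apply Hinc, in_seq. lia. }
      assert (Hb : b = 0).
      { rewrite <- (Hpl 0%nat) by (apply Hall; lia).
        apply sumR_zero. intros k _. unfold Pt. simpl.
        destruct (S k); simpl; lra. }
      assert (Ha : forall k, (k < m - 1)%nat -> a k = 0).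
      { intro k. induction k as [k IHk] using (well_founded_induction lt_wf).
        intro Hk.
        assert (E := Hpl (S k) (Hall (S k) ltac:(lia))).
        rewrite (sumR_single _ _ k) in E; [|lia|].
        2:{ intros k' Hk' Hne.
           destruct (Nat.lt_trichotomy k' k) as [h|[h|h]]; [|lia|].
           - rewrite IHk by lia; lra.
           - unfold Pt; destruct (Nat.ltb_spec (S k') (S k)); [lia|].
             destruct (Nat.eqb_spec (S k') (S k)); [lia|]; lra. }
        unfold Pt in E.
        destruct (Nat.ltb_spec (S k) (S k)); [lia|].
        destruct (Nat.eqb_spec (S k) (S k)); [|lia]. lra. }
      apply Hak0, Ha, Hk0.
    + intros Sl [HND Hlt] Hlen _.
      assert (H := NoDup_incl_length HND (l' := seq 0 m)).
      rewrite length_seq in H.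
      assert (length Sl <= m)%nat.
      { apply H. intros x Hx. apply in_seq. specialize (Hlt x Hx). lia. }
      lia.
  - exists (map (fun j => sqrt (Dv j + 1)) (seq 0 (m - 1))).
    split; [split|split].
    + apply Injective_map_NoDup; [|apply seq_NoDup].
      intros x y; apply sqrtD_inj.
    + intro v. rewrite in_map_iff. split.
      * intros [j [<- Hj]]. apply in_seq in Hj.
        exists 0%nat, (S j). split; [lia|]. split; [lia|].
        rewrite edist_P by lia. simpl. rewrite Nat.sub_0_r. reflexivity.
      * intros [i [j [Hij [Hj <-]]]].
        exists (j - 1)%nat. rewrite edist_P by lia. split; [reflexivity|].
        apply in_seq. lia.
    + rewrite length_map, length_seq. reflexivity.
    + intros i Hi. exists (sqrt (Dv (i - 1) + 1)). split.
      * apply in_map_iff. exists (i - 1)%nat. split; [reflexivity|].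
        apply in_seq. lia.
      * rewrite count_pairs by lia.
        destruct (Nat.ltb_spec i m); lia.
Qed.
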